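(* Let $\mathbf{x}\in\mathbb{R}^3\setminus\mathbb{I}$ lie outside the region enclosed by $\mathcal{M}$, and suppose its dispersed projection $\mathbf{s}$ lies in the relative interior of a face $T=(\mathbf{v}_1,\mathbf{v}_2,\mathbf{v}_3)$ of $\mathcal{M}$, with barycentric coordinates $(\alpha_1,\alpha_2,\alpha_3)$ with respect to $T$ (so $\mathbf{s}=\mathbf{s}_T$ is obtained by barycentric interpolated projection with orientation $\sigma=+1$). Let $l=\langle \mathbf{x}-\mathbf{v}_1,\mathbf{n}_T\rangle$ be the distance from $\mathbf{x}$ to the plane of $T$, and let $\mathbf{a}_i=\hat{\mathbf{n}}^{T,+}_i/\langle \hat{\mathbf{n}}^{T,+}_i,\mathbf{n}_T\rangle$. Then $$\mathbf{x}-\mathbf{s}=l\sum_{i=1}^3\alpha_i\,\mathbf{a}_i .$$ Consequently $\mathbf{x}-\mathbf{s}=c\,\mathbf{n}_{\mathbf{s}}$ with $c=\|\mathbf{x}-\mathbf{s}\|>0$, where $\mathbf{n}_{\mathbf{s}}=\mathbf{w}/\|\mathbf{w}\|$, $\mathbf{w}=\sum_i\alpha_i\mathbf{a}_i\neq 0$, is a unit vector depending only on $T$ (with its aligned vertex normals) and the barycentric coordinates of $\mathbf{s}$, and not otherwise on $\mathbf{x}$.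
   Context: Let $\mathcal{M}$ be a triangle mesh in $\mathbb{R}^3$ that is watertight (closed, without self-intersections) and has no faces of zero area. Each face $T=(\mathbf{v}_1,\mathbf{v}_2,\mathbf{v}_3)$ has an outward unit face normal $\mathbf{n}_T$; each vertex $\mathbf{v}$ has a unit vertex normal $\mathbf{n}_{\mathbf{v}}$, and for every face $T$ and every vertex $\mathbf{v}$ of $T$, $\langle \mathbf{n}_{\mathbf{v}},\mathbf{n}_T\rangle>0$. Vertex normal alignment of a face $T$ with orientation $\sigma\in\{+1,-1\}$: put $\mathbf{m}_T=\sigma\mathbf{n}_T$; for each $i\in\{1,2,3\}$ let $j,k$ be the other two indices, $\mathbf{e}_1=\mathbf{v}_j-\mathbf{v}_i$, $\mathbf{e}_2=\mathbf{v}_k-\mathbf{v}_i$, $\mathbf{m}_i=\sigma\mathbf{n}_{\mathbf{v}_i}$, write the in-plane part $\mathbf{m}_i-\langle\mathbf{m}_i,\mathbf{m}_T\rangle\mathbf{m}_T=c_1\mathbf{e}_1+c_2\mathbf{e}_2$, and define the aligned normal $\hat{\mathbf{n}}^{T,\sigma}_i=(\mathbf{m}_i-\max(0,c_1)\mathbf{e}_1-\max(0,c_2)\mathbf{e}_2)/\|\mathbf{m}_i-\max(0,c_1)\mathbf{e}_1-\max(0,c_2)\mathbf{e}_2\|$. (Aligned normals depend on the face $T$, not only on the vertex.) Barycentric interpolated projection onto $T$ with orientation $\sigma$: for $\mathbf{x}$ with $l:=\langle\mathbf{x}-\mathbf{v}_1,\sigma\mathbf{n}_T\rangle\ge 0$,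 set $\mathbf{v}_i'=\mathbf{v}_i+\big(l/\langle\hat{\mathbf{n}}^{T,\sigma}_i,\sigma\mathbf{n}_T\rangle\big)\hat{\mathbf{n}}^{T,\sigma}_i$, forming the parallel triangle $T'=(\mathbf{v}_1',\mathbf{v}_2',\mathbf{v}_3')$ in the plane through $\mathbf{x}$ parallel to $T$. If $\mathbf{x}\in T'$, i.e. $\mathbf{x}=\sum_i\alpha_i\mathbf{v}_i'$ with $\alpha_i\ge0$, $\sum_i\alpha_i=1$, the projection is $\mathbf{s}_T=\sum_i\alpha_i\mathbf{v}_i$. Dispersed projection of $\mathbf{x}$ (with $\sigma=+1$ if $\mathbf{x}$ is outside the region enclosed by $\mathcal{M}$ and $\sigma=-1$ if inside): (1) compute the nearest point $\tilde{\mathbf{s}}$ of $\mathcal{M}$ to $\mathbf{x}$; (2) let $\mathcal{T}$ be the set of faces containing $\tilde{\mathbf{s}}$; (3) apply vertex normal alignment with orientation $\sigma$ to each $T\in\mathcal{T}$; (4) discard those $T$ with $\mathbf{x}\notin T'$; (5) compute $\mathbf{s}_T$ for the remaining $T$; (6) let $\mathbf{s}$ be the $\mathbf{s}_T$ nearest to $\mathbf{x}$. It is assumed that for every $\mathbf{x}\in\mathbb{R}^3$ at least one face survives step (4), so $\mathbf{s}$ is defined. Exceptional set: for a face $T$, orientation $\sigma$, and $\mathbf{a}^{T,\sigma}_i=\hat{\mathbf{n}}^{T,\sigma}_i/\langle\hat{\mathbf{n}}^{T,\sigma}_i,\sigma\mathbf{n}_T\rangle$, let $\mathbb{I}$ be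 the union over all faces $T$, both $\sigma$, and all pairs of distinct vertices $\mathbf{v}_i,\mathbf{v}_j$ of $T$ of the bilinear surfaces $\{(1-u)\mathbf{v}_i+u\mathbf{v}_j+t((1-u)\mathbf{a}^{T,\sigma}_i+u\mathbf{a}^{T,\sigma}_j): u\in[0,1],t\ge0\}$ (a set of Lebesgue measure zero). *)

(* Defs.v *)
From HB Require Import structures.
From mathcomp Require Import all_boot all_order all_algebra.
From mathcomp Require Import all_classical all_reals topology normedtype.
Set Implicit Arguments. Unset Strict Implicit. Unset Printing Implicit Defensive.
Import Order.TTheory GRing.Theory Num.Theory.
Import numFieldNormedType.Exports.
Local Open Scope ring_scope.
Local Open Scope classical_set_scope.

Section Mesh.
Variable R : realType.
Notation vec := 'rV[R]_3.

Definition dot (u v : vec) : R := \sum_(k < 3) u ord0 k * v ord0 k.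
Definition vnorm (u : vec) : R := Num.sqrt (dot u u).

Definition cross (u v : vec) : vec :=
  \row_(k < 3)
    (if val k == 0%N then u ord0 (inord 1) * v ord0 (inord 2) - u ord0 (inord 2) * v ord0 (inord 1)
     else if val k == 1%N then u ord0 (inord 2) * v ord0 (inord 0) - u ord0 (inord 0) * v ord0 (inord 2)
     else u ord0 (inord 0) * v ord0 (inord 1) - u ord0 (inord 1) * v ord0 (inord 0)).

Definition sh (i : 'I_3) (d : nat) : 'I_3 := inord ((i + d) %% 3).

(* orientation sigma: true = +1, false = -1 *)
Definition sgn (b : bool) : R := if b then 1 else -1.

(* A triangle mesh: vertex type V with positions pos and vertex normals vn,
   face type F, face T has vertices fv T 0, fv T 1, fv T 2 (in this order). *)
Variables (V F : finType) (pos vn : V -> vec) (fv : F -> 'I_3 -> V).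

Definition vert (T : F) (i : 'I_3) : vec := pos (fv T i).

Definition face_cross (T : F) : vec :=
  cross (vert T (inord 1) - vert T (inord 0)) (vert T (inord 2) - vert T (inord 0)).

Definition nT (T : F) : vec := (vnorm (face_cross T))^-1 *: face_cross T.

(* Vertex normal alignment of face T with orientation b (sigma = sgn b), vertex i.
   c1, c2 are the unique coefficients with in-plane part = c1 e1 + c2 e2,
   written out by Cramer's rule on the Gram system. *)
Definition aligned (T : F) (b : bool) (i : 'I_3) : vec :=
  let mT := sgn b *: nT T in
  let e1 := vert T (sh i 1) - vert T i in
  let e2 := vert T (sh i 2) - vert T i in
  let m := sgn b *: vn (fv T i) in
  let p := m - dot m mT *: mT in
  let g11 := dot e1 e1 in let g12 := dot e1 e2 in let g22 := dot e2 e2 in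
  let b1 := dot p e1 in let b2 := dot p e2 in
  let det := g11 * g22 - g12 * g12 in
  let c1 := (b1 * g22 - b2 * g12) / det in
  let c2 := (b2 * g11 - b1 * g12) / det in
  let u := m - Num.max 0 c1 *: e1 - Num.max 0 c2 *: e2 in
  (vnorm u)^-1 *: u.

Definition acoef (T : F) (b : bool) (i : 'I_3) : vec :=
  (dot (aligned T b i) (sgn b *: nT T))^-1 *: aligned T b i.

Definition lval (T : F) (b : bool) (x : vec) : R := dot (x - vert T ord0) (sgn b *: nT T).

Definition vshift (T : F) (b : bool) (x : vec) (i : 'I_3) : vec :=
  vert T i + lval T b x *: acoef T b i.

(* s is the barycentric interpolated projection of x onto T with orientation b
   (this includes the requirement l >= 0 and x in T') *)
Definition bip (T : F) (b : bool) (x s : vec) : Prop :=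
  0 <= lval T b x /\
  exists al : 'I_3 -> R, (forall i, 0 <= al i) /\ \sum_i al i = 1 /\
    x = \sum_i al i *: vshift T b x i /\ s = \sum_i al i *: vert T i.

Definition survives (T : F) (b : bool) (x : vec) : Prop := exists s, bip T b x s.

Definition on_face (T : F) (p : vec) : Prop :=
  exists be : 'I_3 -> R, (forall i, 0 <= be i) /\ \sum_i be i = 1 /\ p = \sum_i be i *: vert T i.

Definition on_mesh (p : vec) : Prop := exists T, on_face T p.

Definition nearest_point (x st : vec) : Prop :=
  on_mesh st /\ forall p, on_mesh p -> vnorm (x - st) <= vnorm (x - p).

Definition dispersed_proj (b : bool) (x s : vec) : Prop :=
  exists st, nearest_point x st /\
    exists T, on_face T st /\ bip T b x s /\
      forall T2 s2, on_face T2 st -> bip T2 b x s2 -> vnorm (x - s) <= vnorm (x - s2).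

Definition exceptional (x : vec) : Prop :=
  exists (T : F) (b : bool) (i j : 'I_3), i != j /\
    exists u t : R, 0 <= u <= 1 /\ 0 <= t /\
      x = (1 - u) *: vert T i + u *: vert T j
          + t *: ((1 - u) *: acoef T b i + u *: acoef T b j).

Definition edge (T : F) (i : 'I_3) : V * V := (fv T i, fv T (sh i 1)).

(* closed: every directed edge occurs in exactly one face, and its reverse
   occurs in some face (hence exactly one) *)
Definition closed_mesh : Prop :=
  (forall T1 T2 i j, edge T1 i = edge T2 j -> T1 = T2 /\ i = j) /\
  (forall T i, exists T2 j, edge T2 j = (fv T (sh i 1), fv T i)).

Definition no_self_intersection : Prop :=
  injective pos /\
  forall T1 T2 p, T1 != T2 -> on_face T1 p -> on_face T2 p ->
    exists be : V -> R, (forall v, 0 <= be v) /\ \sum_v be v = 1 /\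
      (forall v, be v != 0 -> (exists i, fv T1 i = v) /\ (exists j, fv T2 j = v)) /\
      p = \sum_v be v *: pos v.

Definition watertight : Prop := closed_mesh /\ no_self_intersection.

Definition no_zero_area : Prop := forall T, face_cross T != 0.

Definition encloses (Omega : set vec) : Prop :=
  closed Omega /\ bounded_set Omega /\
  closure Omega `\` interior Omega = [set p | on_mesh p].

Definition outward_normals (Omega : set vec) : Prop :=
  forall T, exists e : R, 0 < e /\ forall t : R, 0 < t < e ->
    ~ Omega (3^-1 *: (vert T 0 + vert T (inord 1) + vert T (inord 2)) + t *: nT T).

Definition normal_hyps : Prop :=
  (forall v, vnorm (vn v) = 1) /\ (forall T i, 0 < dot (vn (fv T i)) (nT T)).

Definition always_survives (Omega : set vec) : Prop :=
  forall y, exists st, nearest_point y st /\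
    exists T, on_face T st /\ survives T (`[< ~ Omega y >]) y.

End Mesh.

(* Main.v *)
Require Import Defs.
From HB Require Import structures.
From mathcomp Require Import all_boot all_order all_algebra.
From mathcomp Require Import all_classical all_reals topology normedtype.
From mathcomp Require Import ring lra.
Import Order.TTheory GRing.Theory Num.Theory.
Import numFieldNormedType.Exports.
Local Open Scope ring_scope.
Local Open Scope classical_set_scope.

Set Implicit Arguments. Unset Strict Implicit.
Section H.
Variable R : realType.
Notation vec := 'rV[R]_3.
Notation i0 := (inord 0 : 'I_3).
Notation i1 := (inord 1 : 'I_3).
Notation i2 := (inord 2 : 'I_3).

Lemma ord3 (k : 'I_3) : k = i0 \/ k = i1 \/ k = i2.
Proof.
case: k => [[|[|[|k]]] Hk] //.
- by left; apply/val_inj; rewrite /= inordK.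
- by right; left; apply/val_inj; rewrite /= inordK.
- by right; right; apply/val_inj; rewrite /= inordK.
Qed.

Lemma i01 : i0 != i1. Proof. by apply/eqP => /(congr1 val); rewrite /= !inordK. Qed.
Lemma i02 : i0 != i2. Proof. by apply/eqP => /(congr1 val); rewrite /= !inordK. Qed.
Lemma i12 : i1 != i2. Proof. by apply/eqP => /(congr1 val); rewrite /= !inordK. Qed.

Lemma sum3 (M : zmodType) (f : 'I_3 -> M) : \sum_(i < 3) f i = f i0 + f i1 + f i2.
Proof.
rewrite !big_ord_recl big_ord0 addr0 addrA; congr (f _ + f _ + f _);
 by apply/val_inj; rewrite /= ?inordK.
Qed.

Lemma eq3 (u v : vec) : u ord0 i0 = v ord0 i0 -> u ord0 i1 = v ord0 i1 ->
  u ord0 i2 = v ord0 i2 -> u = v.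
Proof.
move=> h0 h1 h2; apply/rowP => k; rewrite (ord1 ord0) in h0 h1 h2 *.
rewrite (_ : 0 = ord0) //.
by case: (ord3 k) => [->|[->|->]].
Qed.

Lemma crossE (u v : vec) :
  [/\ cross u v ord0 i0 = u ord0 i1 * v ord0 i2 - u ord0 i2 * v ord0 i1,
      cross u v ord0 i1 = u ord0 i2 * v ord0 i0 - u ord0 i0 * v ord0 i2 &
      cross u v ord0 i2 = u ord0 i0 * v ord0 i1 - u ord0 i1 * v ord0 i0].
Proof. by rewrite !mxE /= !inordK. Qed.

Lemma key2 (a b p1 q1 p2 q2 : R) : a * p1 + b * q1 = 0 -> a * p2 + b * q2 = 0 ->
  a * (p1 * q2 - p2 * q1) = 0 /\ b * (p1 * q2 - p2 * q1) = 0.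
Proof.
move=> e1 e2; split.
  have -> : a * (p1 * q2 - p2 * q1) = q2 * (a * p1 + b * q1) - q1 * (a * p2 + b * q2) by ring.
  by rewrite e1 e2 !mulr0 subr0.
have -> : b * (p1 * q2 - p2 * q1) = p1 * (a * p2 + b * q2) - p2 * (a * p1 + b * q1) by ring.
by rewrite e1 e2 !mulr0 subr0.
Qed.

Arguments key2 {a b p1 q1 p2 q2}.
Lemma lin_indep (u1 u2 : vec) a b : cross u1 u2 != 0 -> a *: u1 + b *: u2 = 0 ->
  a = 0 /\ b = 0.
Proof.
move=> hc he.
have hk k : a * u1 ord0 k + b * u2 ord0 k = 0.
  by have := congr1 (fun w : vec => w ord0 k) he; rewrite !mxE.
have h0 := hk i0; have h1 := hk i1; have h2 := hk i2.
case: (crossE u1 u2) => c0 c1 c2.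
have hz : forall t : R, (forall k, t * cross u1 u2 ord0 k = 0) -> t = 0.
  move=> t ht; apply/eqP; apply: contraNT hc => tn0; apply/eqP.
  apply/matrixP => i k; rewrite (ord1 i); have /eqP := ht k; rewrite mulf_eq0.
  by rewrite (negbTE tn0) /= => /eqP ->; rewrite mxE.

split; apply: hz => k; case: (ord3 k) => [->|[->|->]]; rewrite ?c0 ?c1 ?c2.
- exact: (proj1 (key2 h1 h2)).
- exact: (proj1 (key2 h2 h0)).
- exact: (proj1 (key2 h0 h1)).
- exact: (proj2 (key2 h1 h2)).
- exact: (proj2 (key2 h2 h0)).
- exact: (proj2 (key2 h0 h1)).
Qed.

Arguments lin_indep {u1 u2 a b}.
Lemma bary_uniq (v : 'I_3 -> vec) (p q : 'I_3 -> R) :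
  cross (v i1 - v i0) (v i2 - v i0) != 0 ->
  \sum_i p i = 1 -> \sum_i q i = 1 ->
  \sum_i p i *: v i = \sum_i q i *: v i -> forall i, p i = q i.
Proof.
move=> hc hp hq he.
rewrite !sum3 in hp hq he.
have e : (p i1 - q i1) *: (v i1 - v i0) + (p i2 - q i2) *: (v i2 - v i0) = 0.
  have h0 : p i0 = 1 - p i1 - p i2 by rewrite -hp; ring.
  have h0' : q i0 = 1 - q i1 - q i2 by rewrite -hq; ring.
  rewrite h0 h0' in he.
  apply: eq3; rewrite !mxE; [have hk := congr1 (fun w : vec => w ord0 i0) he
    | have hk := congr1 (fun w : vec => w ord0 i1) he
    | have hk := congr1 (fun w : vec => w ord0 i2) he];
  rewrite /= !mxE in hk; move/eqP: hk; rewrite -subr_eq0 => /eqP hk;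
  rewrite -[RHS]hk; ring.
have [d1 d2] := lin_indep hc e.
have h0 : p i0 - q i0 = 0.
  have : p i0 = 1 - p i1 - p i2 by rewrite -hp; ring.
  have : q i0 = 1 - q i1 - q i2 by rewrite -hq; ring.
  move=> -> ->; move/eqP: d1; move/eqP: d2; rewrite !subr_eq0 => /eqP-> /eqP->.
  by rewrite subrr.
move=> i; apply/eqP; rewrite -subr_eq0; apply/eqP.
by case: (ord3 i) => [->|[->|->]].
Qed.

Lemma cross0l (w : vec) : cross 0 w = 0.
Proof. by apply: eq3; rewrite /cross !mxE /= !inordK //= ?mxE; ring. Qed.
Lemma cross0r (w : vec) : cross w 0 = 0.
Proof. by apply: eq3; rewrite /cross !mxE /= !inordK //= ?mxE; ring. Qed.
Lemma crossuu (w : vec) : cross w w = 0.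
Proof. by apply: eq3; rewrite /cross !mxE /= !inordK //= ?mxE; ring. Qed.

Lemma cross_rev (v0 v1 v2 : vec) :
  [/\ cross (v2 - v0) (v1 - v0) = - cross (v1 - v0) (v2 - v0),
      cross (v0 - v1) (v2 - v1) = - cross (v1 - v0) (v2 - v0) &
      cross (v1 - v2) (v0 - v2) = - cross (v1 - v0) (v2 - v0)].
Proof.
split; apply: eq3; rewrite /cross !mxE /= !inordK //= ?mxE; ring.
Qed.

Lemma dotE (u w : vec) : dot u w = u ord0 i0 * w ord0 i0 + u ord0 i1 * w ord0 i1 + u ord0 i2 * w ord0 i2.
Proof. by rewrite /dot sum3. Qed.

Lemma dotNr (u w : vec) : dot u (- w) = - dot u w.
Proof. rewrite !dotE !mxE; ring. Qed.

Lemma dotZZ (l : R) (w : vec) : dot (l *: w) (l *: w) = l ^+ 2 * dot w w.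
Proof. rewrite !dotE !mxE; ring. Qed.

Lemma dotNN (w : vec) : dot (- w) (- w) = dot w w.
Proof. rewrite !dotE !mxE; ring. Qed.

Lemma dot_ge0 (w : vec) : 0 <= dot w w.
Proof. rewrite dotE; have := sqr_ge0 (w ord0 i0); have := sqr_ge0 (w ord0 i1);
  have := sqr_ge0 (w ord0 i2); rewrite !expr2; lra. Qed.

Lemma vnorm_gt0 (w : vec) : w != 0 -> 0 < vnorm w.
Proof.
move=> hw; rewrite /vnorm sqrtr_gt0 lt_neqAle dot_ge0 andbT.
apply: contra hw; rewrite eq_sym dotE => /eqP h.
have := sqr_ge0 (w ord0 i0); have := sqr_ge0 (w ord0 i1);
  have := sqr_ge0 (w ord0 i2); rewrite !expr2 => a b c.
apply/eqP; apply: eq3; rewrite mxE; apply/eqP; rewrite -sqrf_eq0 expr2; apply/eqP; lra.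
Qed.

Lemma vnormZ (l : R) (w : vec) : vnorm (l *: w) = `|l| * vnorm w.
Proof. by rewrite /vnorm dotZZ sqrtrM ?sqr_ge0 // sqrtr_sqr. Qed.

Lemma vnormN (w : vec) : vnorm (- w) = vnorm w.
Proof. by rewrite /vnorm dotNN. Qed.

Lemma sum_image (V : finType) (M : zmodType) (f : 'I_3 -> V) (g : V -> M) :
  injective f -> (forall v, (forall i, f i != v) -> g v = 0) ->
  \sum_v g v = \sum_i g (f i).
Proof.
move=> finj hg.
rewrite (bigID (fun v => v \in [set f i | i in 'I_3]%SET)) /=.
rewrite [X in _ + X]big1 ?addr0.
  rewrite big_imset //; by move=> a b _ _; apply: finj.
move=> v hv; apply: hg => i; apply: contraNneq hv => <-.
by apply/imsetP; exists i.
Qed.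

Lemma sh01 : sh i0 1 = i1. Proof. by apply/val_inj; rewrite /sh /= !inordK. Qed.
Lemma sh02 : sh i0 2 = i2. Proof. by apply/val_inj; rewrite /sh /= !inordK. Qed.
Lemma sh11 : sh i1 1 = i2. Proof. by apply/val_inj; rewrite /sh /= !inordK. Qed.
Lemma sh12 : sh i1 2 = i0. Proof. by apply/val_inj; rewrite /sh /= !inordK. Qed.
Lemma sh21 : sh i2 1 = i0. Proof. by apply/val_inj; rewrite /sh /= !inordK. Qed.
Lemma sh22 : sh i2 2 = i1. Proof. by apply/val_inj; rewrite /sh /= !inordK. Qed.

Section M.
Variables (V F : finType) (pos vn : V -> vec) (fv : F -> 'I_3 -> V).

Lemma fv_inj T : face_cross pos fv T != 0 -> injective (fv T).
Proof.
move=> hnz a b hab; apply/eqP; apply: contraNT hnz => nab; apply/eqP.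
rewrite /face_cross /vert.
move: nab hab; case: (ord3 a) => [->|[->|->]]; case: (ord3 b) => [->|[->|->]];
  rewrite ?eqxx // => _ h;
  by rewrite ?h ?subrr ?cross0l ?cross0r // -?h ?subrr ?cross0l ?cross0r ?crossuu.
Qed.

Lemma caseB T T2 j0 j1 j2 : injective (fv T) ->
  fv T2 j0 = fv T i0 -> fv T2 j1 = fv T i1 -> fv T2 j2 = fv T i2 ->
  edge fv T2 j0 = edge fv T i0 \/ face_cross pos fv T2 = - face_cross pos fv T.
Proof.
move=> finj.
have n01 : fv T i0 <> fv T i1 by move/finj => /eqP; rewrite (negbTE i01).
have n02 : fv T i0 <> fv T i2 by move/finj => /eqP; rewrite (negbTE i02).
have n12 : fv T i1 <> fv T i2 by move/finj => /eqP; rewrite (negbTE i12).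
case: (cross_rev (pos (fv T i0)) (pos (fv T i1)) (pos (fv T i2))) => r1 r2 r3.
rewrite /edge /face_cross /vert.
case: (ord3 j0) => [->|[->|->]]; case: (ord3 j1) => [->|[->|->]];
  case: (ord3 j2) => [->|[->|->]] => h0 h1 h2; try congruence.
all: rewrite ?sh01 ?sh11 ?sh21.
all: first [ by left; congruence | by right; rewrite h0 h1 h2 ?r1 ?r2 ?r3 ].
Qed.
End M.
End H.
Unset Implicit Arguments. Set Strict Implicit.

Notation i0 := (inord 0 : 'I_3).
Notation i1 := (inord 1 : 'I_3).
Notation i2 := (inord 2 : 'I_3).

Theorem lemma1 (R : realType) (V F : finType) (pos vn : V -> 'rV[R]_3)
  (fv : F -> 'I_3 -> V) (Omega : set 'rV[R]_3)
  (Hwt : watertight pos fv) (Hnz : no_zero_area pos fv)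
  (Henc : encloses pos fv Omega) (Hout : outward_normals pos fv Omega)
  (Hnorm : normal_hyps pos vn fv) (Hsurv : always_survives pos vn fv Omega)
  (x s : 'rV[R]_3) (T : F) (al : 'I_3 -> R)
  (HxI : ~ exceptional pos vn fv x) (HxO : ~ Omega x)
  (Hs : dispersed_proj pos vn fv true x s)
  (Hal : forall i, 0 < al i) (Hal1 : \sum_i al i = 1)
  (HsT : s = \sum_i al i *: vert pos fv T i) :
  let l := lval pos fv T true x in
  let w := \sum_i al i *: acoef pos vn fv T true i in
  x - s = l *: w /\ w != 0 /\
  0 < vnorm (x - s) /\ x - s = vnorm (x - s) *: ((vnorm w)^-1 *: w).

Proof.
move=> l w.
have finjT := fv_inj (Hnz T).
case: Hs => st [Hnear [T2 [Hst2 [Hbip2 Hmin]]]].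
case: Hbip2 => Hl2 [be [Hbe0 [Hbe1 [Hx2 Hs2]]]].
have HsOn : on_face pos fv T s by exists al; split => // i; exact: ltW.
have HsOn2 : on_face pos fv T2 s by exists be.
have eqT : T2 = T.
  apply/eqP; apply/negPn/negP => hne.
  case: Hwt => [[Hc1 Hc2] [Hpinj Hnsi]].
  have hne' : T != T2 by rewrite eq_sym.
  have [ga [ga0 [ga1 [gasupp Hsga]]]] := Hnsi T T2 s hne' HsOn HsOn2.
  case: (pselect (forall i, exists j, fv T2 j = fv T i)) => [hall|hnot].
  - case: (hall i0) => j0 h0; case: (hall i1) => j1 h1; case: (hall i2) => j2 h2.
    case: (caseB pos finjT h0 h1 h2) => [he|hf].
    + by have [/eqP] := Hc1 _ _ _ _ he; rewrite (negbTE hne).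
    + case: Hnorm => _ Hn; have a := Hn T2 j0; have b := Hn T i0.
      rewrite h0 /nT hf vnormN scalerN dotNr in a; rewrite /nT in b.
      by move: a b; rewrite oppr_gt0 => a b; have := lt_trans a b; rewrite ltxx.
  - have [i hi] : exists i, forall j, fv T2 j != fv T i.
      apply: contrapT => hn; apply: hnot => i; apply: contrapT => hj; apply: hn.
      by exists i => j; apply/eqP => e; apply: hj; exists j.
    have gz : forall v, (forall k, fv T k != v) -> ga v = 0.
      move=> v hv; apply: contrapT => /eqP gv; have [[k hk] _] := gasupp v gv.
      by move/eqP: hk; rewrite (negbTE (hv k)).
    have e1 : \sum_v ga v = \sum_k ga (fv T k) := sum_image finjT gz.
    have e2 : \sum_v ga v *: pos v = \sum_k ga (fv T k) *: vert pos fv T k.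
      by apply: (sum_image finjT (g := fun v => ga v *: pos v)) => v hv; rewrite gz // scale0r.
    have hq : \sum_k ga (fv T k) = 1 by rewrite -e1.
    have hb := bary_uniq (v := vert pos fv T) (Hnz T) Hal1 hq.
    have hgi : ga (fv T i) = 0.
      apply: contrapT => /eqP gv; have [_ [j hj]] := gasupp _ gv.
      by move/eqP: hj; rewrite (negbTE (hi j)).
    have := Hal i; rewrite hb ?hgi ?ltxx //.
    by rewrite -HsT -e2 -Hsga.
subst T2.
have hbe := bary_uniq (v := vert pos fv T) (Hnz T) Hbe1 Hal1 (etrans (esym Hs2) HsT).
have Hxs : x - s = l *: w.
  rewrite {1}Hx2 HsT /vshift.
  under eq_bigr do rewrite hbe scalerDr.
  rewrite big_split /= [X in X - _]addrC addrK /w /l scaler_sumr.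
  apply eq_bigr => i _; by rewrite scalerA mulrC -scalerA.
case: Henc => Hcl [_ Heq].
have Os : Omega s.
  have : (closure Omega `\` interior Omega) s by rewrite Heq /=; exists T.
  by case; rewrite -(closure_id Omega).1.
have xs0 : x - s != 0.
  by rewrite subr_eq0; apply/eqP => exs; apply: HxO; rewrite exs.
have w0 : w != 0.
  by apply: contra xs0 => /eqP w0; rewrite Hxs w0 scaler0.
have l0 : l != 0.
  by apply: contra xs0 => /eqP l0; rewrite Hxs l0 scale0r.
have lpos : 0 < l by rewrite lt_neqAle eq_sym l0 Hl2.
split => //; split => //; split; first exact: vnorm_gt0.
rewrite {2}Hxs vnormZ ger0_norm ?ltW // scalerA mulfK ?Hxs //.
by rewrite gt_eqF // vnorm_gt0.
Qed.
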